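(* Let $w\in S_k$ and let $\mathbf b=(b_1,\dots,b_{k-1})$ be non-negative integers with $\sum_i b_i=\ell(w)$. Let $F$ be the set of inversions of $w$, for $f=(i,j)\in F$ put $L(f)=\sum_{r=i}^{j-1}v_r$, and $L_w=\prod_{f\in F}L(f)$. Then: (1) the coefficient of $v^{\mathbf b}$ in $R_w$ is non-zero if and only if the coefficient of $v^{\mathbf b}$ in $L_w$ is non-zero; (2) for $1\le s\le t\le k-1$ let $K_{s,t}$ be the number of inversions $(i,j)$ of $w$ with $s\le i<j\le t+1$; then the coefficient of $v^{\mathbf b}$ in $R_w$ is non-zero if and only if $\sum_{i=s}^t b_i\ge K_{s,t}$ for all $1\le s\le t\le k-1$.
   Context: Fix $k\ge 2$. Permutations $u\in S_k$ are written in one-line notation $u=(u(1),\dots,u(k))$. An inversion of $u$ is a pair of positions $(i,j)$ with $i<j$ and $u(i)>u(j)$; $\ell(u)$ is the number of inversions. For $1\le n<m\le k$ let $u\circ(n\,m)$ denote the permutation obtained from $u$ by swapping the entries in positions $n$ and $m$. We say $u'$ covers $u$ if $u'=u\circ(n\,m)$ for some $n<m$ and $\ell(u')=\ell(u)+1$; the weight of this cover is $v_n+v_{n+1}+\dots+v_{m-1}$. For $w\in S_k$, $R_w\in\mathbb Z[v_1,\dots,v_{k-1}]$ is the sum, over all chains $\mathrm{id}=u_0,u_1,\dots,u_{\ell(w)}=w$ in which each $u_{i+1}$ covers $u_i$, of the product of the weights of the covers $u_i\to u_{i+1}$. $v^{\mathbf b}=v_1^{b_1}\cdots v_{k-1}^{b_{k-1}}$.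 *)

(* Defs.v *)
From HB Require Import structures.
From mathcomp Require Import all_boot all_order all_algebra all_fingroup.
Set Implicit Arguments. Unset Strict Implicit. Unset Printing Implicit Defensive.
Import GRing.Theory.

(* Polynomials in v_1..v_n with integer coefficients, represented as a
   (non-normalized) formal sum of terms (exponent vector, coefficient).
   Exponent vectors are seq nat of length n; position r (0-indexed)
   is the exponent of v_(r+1). *)
Definition mpoly := seq (seq nat * int).
Definition exp_add (a c : seq nat) : seq nat := [seq x.1 + x.2 | x <- zip a c].
Definition mp_mul (p q : mpoly) : mpoly :=
  [seq (exp_add x.1 y.1, (x.2 * y.2)%R) | x <- p, y <- q].
Definition mp_one (n : nat) : mpoly := [:: (nseq n 0, 1%R)].
Definition mp_var (n r : nat) : mpoly :=
  [:: ([seq nat_of_bool (i == r) | i <- iota 0 n], 1%R)].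
Definition mp_sum (ps : seq mpoly) : mpoly := flatten ps.
Definition mp_prod (n : nat) (ps : seq mpoly) : mpoly := foldr mp_mul (mp_one n) ps.
Definition mp_coef (b : seq nat) (p : mpoly) : int := (\sum_(x <- p | x.1 == b) x.2)%R.

(* v_(a+1) + ... + v_c  (0-indexed variables a .. c-1) *)
Definition interval_form (n a c : nat) : mpoly :=
  mp_sum [seq mp_var n r | r <- iota a (c - a)].

(* Permutations of S_k on positions 'I_k = {0..k-1} (position i+1 of the paper). *)
Definition inv_set (k : nat) (u : 'S_k) : {set 'I_k * 'I_k} :=
  [set p : 'I_k * 'I_k | (p.1 < p.2) && (u p.2 < u p.1)].
Definition len (k : nat) (u : 'S_k) : nat := #|inv_set u|.

(* u' = u o (n m), n < m, with l(u') = l(u)+1;  (tperm n m * u) x = u (tperm n m x) *)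
Definition covers_via (k : nat) (u u' : 'S_k) (p : 'I_k * 'I_k) : bool :=
  [&& p.1 < p.2, u' == (tperm p.1 p.2 * u)%g & len u' == (len u).+1].
Definition covers (k : nat) (u u' : 'S_k) : bool := [exists p, covers_via u u' p].
(* weight v_n + ... + v_(m-1) of the cover (paper's 1-indexed n = p.1+1, m = p.2+1) *)
Definition cover_weight (k : nat) (u u' : 'S_k) : mpoly :=
  mp_sum (map (fun p : 'I_k * 'I_k => interval_form k.-1 (nat_of_ord p.1) (nat_of_ord p.2))
          (enum [pred p : 'I_k * 'I_k | covers_via u u' p])).

Definition chain_weight (k : nat) (c : seq 'S_k) : mpoly :=
  mp_prod k.-1 [seq cover_weight x.1 x.2 | x <- zip (1%g :: c) c].

Definition R_poly (k : nat) (w : 'S_k) : mpoly :=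
  mp_sum [seq chain_weight (tval c) |
           c <- enum [pred c : (len w).-tuple 'S_k |
                        path (@covers k) 1%g c && (last 1%g c == w)]].

Definition L_poly (k : nat) (w : 'S_k) : mpoly :=
  mp_prod k.-1 [seq interval_form k.-1 p.1 p.2 | p : 'I_k * 'I_k <- enum (inv_set w)].

(* K_{s,t} (1-indexed s,t): inversions (i,j) with s <= i < j <= t+1 (1-indexed) *)
Definition Kst (k : nat) (w : 'S_k) (s t : nat) : nat :=
  #|[set p in inv_set w | (s <= p.1.+1) && (p.2.+1 <= t.+1)]|.

(* Main.v *)
Require Import Defs.
From HB Require Import structures.
From mathcomp Require Import all_boot all_order all_algebra all_fingroup.
Import GRing.Theory.
From mathcomp Require Import zify.
Set Implicit Arguments. Unset Strict Implicit. Unset Printing Implicit Defensive.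

Definition exps (p : mpoly) : seq (seq nat) := map fst p.
Definition good (n : nat) (p : mpoly) : bool :=
  all (fun x : seq nat * int => (size x.1 == n) && (x.2 == 1%R)) p.

Lemma coef_good n b p : good n p -> (mp_coef b p != 0%R) = (b \in exps p).
Proof.
rewrite /mp_coef; elim: p => [|x p IH] /=; first by rewrite big_nil.
case/andP=> /andP[_ /eqP x1] gp; rewrite big_cons in_cons.
case: (x.1 =P b) => [<-|nb] /=; last first.
  by rewrite IH //; case: eqP => // e; case: nb.
rewrite eqxx /= x1; apply/negP => /eqP e.
have: (0 <= \sum_(i <- p | i.1 == x.1) i.2)%R.
  rewrite big_seq_cond; apply: Num.Theory.sumr_ge0 => i /andP[ip _].
  by move/allP: gp => /(_ i ip) /andP[_ /eqP ->].
move: e; set S := (\sum_(_ <- _ | _) _)%R => e h; lia.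
Qed.

Lemma size_exp_add a c : size (exp_add a c) = minn (size a) (size c).
Proof. by rewrite size_map size_zip. Qed.

Lemma nth_exp_add a c i : size a = size c ->
  nth 0 (exp_add a c) i = nth 0 a i + nth 0 c i.
Proof.
move=> sac; case: (ltnP i (size a)) => hi.
  rewrite (nth_map (0,0)) ?size_zip ?sac ?minnn -?sac // nth_zip //.
by rewrite !nth_default ?size_exp_add -?sac ?minnn.
Qed.

Lemma exp_addC a c : size a = size c -> exp_add a c = exp_add c a.
Proof.
move=> sac; apply: (@eq_from_nth _ 0); first by rewrite !size_exp_add minnC.
by move=> i _; rewrite !nth_exp_add // addnC.
Qed.

Lemma exp_addA a c d : size a = size c -> size c = size d ->
  exp_add a (exp_add c d) = exp_add (exp_add a c) d.
Proof.
move=> h1 h2; apply: (@eq_from_nth _ 0).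
  by rewrite !size_exp_add -h2 -h1 !minnn.
move=> i _; rewrite !nth_exp_add ?addnA // ?size_exp_add -?h2 -?h1 ?minnn //.
Qed.

Lemma exp_add0 n a : size a = n -> exp_add (nseq n 0) a = a.
Proof.
move=> sa; apply: (@eq_from_nth _ 0); first by rewrite size_exp_add size_nseq sa minnn.
by move=> i _; rewrite nth_exp_add ?size_nseq // nth_nseq if_same.
Qed.

Lemma mem_mul p q b : b \in exps (mp_mul p q) <->
  exists x y, [/\ x \in exps p, y \in exps q & b = exp_add x y].
Proof.
rewrite /exps /mp_mul; split.
  case/mapP=> z /allpairsP [[x y] [xp yq ->]] -> /=.
  by exists x.1, y.1; split => //; apply: map_f.
case=> x [y [/mapP[x' x'p ->] /mapP[y' y'q ->] ->]].
apply/mapP; exists (exp_add x'.1 y'.1, (x'.2 * y'.2)%R) => //.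
by apply/allpairsP; exists (x', y').
Qed.

Lemma good_mul n p q : good n p -> good n q -> good n (mp_mul p q).
Proof.
move=> /allP gp /allP gq; apply/allP => z /allpairsP [[x y] [xp yq ->]] /=.
case/andP: (gp x xp) => /eqP sx /eqP x2; case/andP: (gq y yq) => /eqP sy /eqP y2.
by rewrite size_exp_add sx sy minnn x2 y2 mulr1 !eqxx.
Qed.

Lemma good_one n : good n (mp_one n).
Proof. by rewrite /good /= size_nseq !eqxx. Qed.

Lemma good_var n r : good n (mp_var n r).
Proof. by rewrite /good /= size_map size_iota !eqxx. Qed.

Lemma good_sum n ps : all (good n) ps -> good n (mp_sum ps).
Proof.
elim: ps => //= p ps IH /andP[g1 g2].
rewrite /good all_cat; apply/andP; split; [exact: g1 | exact: IH].
Qed.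

Lemma mem_sum ps b : b \in exps (mp_sum ps) <-> exists2 p, p \in ps & b \in exps p.
Proof.
elim: ps => [|p ps IH] /=; first by split => // [[]].
rewrite /exps map_cat mem_cat; split.
  case/orP => [h|/IH [q qps bq]]; first by exists p; rewrite ?mem_head.
  by exists q; rewrite // in_cons qps orbT.
case=> q; rewrite in_cons; case/orP => [/eqP ->|qps] bq; first by rewrite bq.
by apply/orP; right; apply/IH; exists q.
Qed.

Lemma good_prod n ps : all (good n) ps -> good n (mp_prod n ps).
Proof.
elim: ps => [|p ps IH] /=; first by move=> _; apply: good_one.
by case/andP=> g1 g2; apply: good_mul => //; apply: IH.
Qed.

Lemma good_exps n p x : good n p -> x \in exps p -> size x = n.
Proof. by move=> /allP g /mapP[y yp ->]; case/andP: (g y yp) => /eqP. Qed.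

Lemma mem_prod_cat n l1 l2 b : all (good n) (l1 ++ l2) ->
  b \in exps (mp_prod n (l1 ++ l2)) <->
  exists x y, [/\ x \in exps (mp_prod n l1), y \in exps (mp_prod n l2) & b = exp_add x y].
Proof.
elim: l1 b => [|p l1 IH] b /=.
  move=> g; split.
    move=> bin; exists (nseq n 0), b; split => //; first by rewrite mem_head.
    by rewrite exp_add0 // (good_exps (good_prod g) bin).
  case=> x [y []]; rewrite /exps /= inE => /eqP -> yin ->.
  by rewrite exp_add0 // (good_exps (good_prod g) yin).
case/andP=> gp g; split.
  case/mem_mul=> x [z [xp /(IH _ g) [y1 [y2 [y1i y2i ->]]] ->]].
  exists (exp_add x y1), y2; split => //.
    by apply/mem_mul; exists x, y1.
  rewrite all_cat in g; case/andP: g => g1 g2.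
  by rewrite exp_addA //; rewrite ?(good_exps gp xp) ?(good_exps (good_prod g1) y1i)
    ?(good_exps (good_prod g2) y2i).
case=> x [y [/mem_mul [x1 [x2 [x1i x2i ->]]] yi ->]].
rewrite all_cat in g; case/andP: g => g1 g2.
apply/mem_mul; exists x1, (exp_add x2 y); split => //.
  by apply/(IH _); [rewrite all_cat g1 g2 | exists x2, y].
by rewrite exp_addA //; rewrite ?(good_exps gp x1i) ?(good_exps (good_prod g1) x2i)
  ?(good_exps (good_prod g2) yi).
Qed.

Lemma mem_prod_perm n l1 l2 b : perm_eq l1 l2 -> all (good n) l1 ->
  (b \in exps (mp_prod n l1)) = (b \in exps (mp_prod n l2)).
Proof.
move=> pe g1.
pose P s := all (good n) s /\ forall b, (b \in exps (mp_prod n s)) = (b \in exps (mp_prod n l1)).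
suff [_ ->] : P l2 by [].
apply: (catCA_perm_ind (P := P)) pe _; last by split.
move=> s1 s2 s3 [g h]; have g' : all (good n) (s2 ++ s1 ++ s3).
  by move: g; rewrite !all_cat; case/and3P => -> -> ->.
move: (g) (g'); rewrite !all_cat => /and3P[G1 G2 G3] _.
have G13 : all (good n) (s1 ++ s3) by rewrite all_cat G1 G3.
have G23 : all (good n) (s2 ++ s3) by rewrite all_cat G2 G3.
split => // c; rewrite -h; apply/idP/idP.
  move/(mem_prod_cat _ g') => [y [z [yi zi ->]]].
  move/(mem_prod_cat _ G13): zi => [x [z' [xi z'i ->]]]; apply/(mem_prod_cat _ g).
  have sx := good_exps (good_prod G1) xi; have sy := good_exps (good_prod G2) yi.
  have sz := good_exps (good_prod G3) z'i.
  exists x, (exp_add y z'); split => //.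
    by apply/(mem_prod_cat _ G23); exists y, z'.
  by rewrite !exp_addA ?(exp_addC (a:=x)) ?sx ?sy ?sz.
move/(mem_prod_cat _ g) => [y [z [yi zi ->]]].
move/(mem_prod_cat _ G23): zi => [x [z' [xi z'i ->]]]; apply/(mem_prod_cat _ g').
have sx := good_exps (good_prod G2) xi; have sy := good_exps (good_prod G1) yi.
have sz := good_exps (good_prod G3) z'i.
exists x, (exp_add y z'); split => //.
  by apply/(mem_prod_cat _ G13); exists y, z'.
by rewrite !exp_addA ?(exp_addC (a:=x)) ?sx ?sy ?sz.
Qed.

Section Inv.
Variable k : nat.
Implicit Types (u : 'S_k) (x y n m : 'I_k).

Definition blk (s e : nat) (x : 'I_k) : bool := (s <= x) && (x < e).
Definition BI u s e : nat :=
  \sum_(x | blk s e x) \sum_(y | blk s e y) ((x < y) && (u y < u x)).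

Lemma blk_tperm n m s e x : n < m -> s <= n -> m < e ->
  blk s e (tperm n m x) = blk s e x.
Proof. by move=> *; case: tpermP => [->|->|//]; rewrite /blk; lia. Qed.

Lemma BI_reindex u n m s e : n < m -> s <= n -> m < e ->
  BI (tperm n m * u) s e = \sum_(x | blk s e x) \sum_(y | blk s e y)
     ((tperm n m x < tperm n m y) && (u y < u x)).
Proof.
move=> nm sn me; rewrite /BI (reindex_inj (can_inj (tpermK n m))).
apply: eq_big => [x|x _]; first by rewrite blk_tperm.
rewrite (reindex_inj (can_inj (tpermK n m))).
apply: eq_big => [y|y _]; first by rewrite blk_tperm.
by rewrite !permM !tpermK.
Qed.

Lemma pt_swap u n m x y : n < m ->
  ((tperm n m x < tperm n m y) && (u y < u x) : nat)
  + (((y == m) && ((n < x < m) && (u m < u x)))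
     + ((x == n) && ((y == m) && (u m < u n)))
     + ((x == n) && ((n < y < m) && (u y < u n))))
  = ((x < y) && (u y < u x) : nat)
  + (((y == n) && ((n < x < m) && (u n < u x)))
     + ((x == m) && ((y == n) && (u n < u m)))
     + ((x == m) && ((n < y < m) && (u y < u m)))).
Proof.
move=> nm.
case: (tpermP n m x) => [ex|ex|xn xm]; case: (tpermP n m y) => [ey|ey|yn ym];
  subst; rewrite -!val_eqE /=; try lia.
all: try (have xn' : (x : nat) != n by apply/eqP => h; apply: xn; apply: val_inj).
all: try (have xm' : (x : nat) != m by apply/eqP => h; apply: xm; apply: val_inj).
all: try (have yn' : (y : nat) != n by apply/eqP => h; apply: yn; apply: val_inj).
all: try (have ym' : (y : nat) != m by apply/eqP => h; apply: ym; apply: val_inj).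
all: lia.
Qed.

Lemma sum_pick (P : pred 'I_k) c (b : bool) : P c ->
  \sum_(y | P y) ((y == c) && b : nat) = b.
Proof.
move=> Pc; rewrite (bigD1 c) //= eqxx big1 ?addn0 // => y /andP[_ /negbTE ->].
by [].
Qed.

Lemma BI_swap_raw u n m s e : n < m -> s <= n -> m < e ->
  BI (tperm n m * u) s e
  + (\sum_(x | blk s e x) ((n < x < m) && (u m < u x) : nat) + (u m < u n)
     + \sum_(y | blk s e y) ((n < y < m) && (u y < u n) : nat))
  = BI u s e
  + (\sum_(x | blk s e x) ((n < x < m) && (u n < u x) : nat) + (u n < u m)
     + \sum_(y | blk s e y) ((n < y < m) && (u y < u m) : nat)).
Proof.
move=> nm sn me.
have bn : blk s e n by rewrite /blk; lia.
have bm : blk s e m by rewrite /blk; lia.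
have S4 : forall P (F G H I : 'I_k -> 'I_k -> nat),
    \sum_(x | P x) \sum_(y | P y) (F x y + (G x y + H x y + I x y)) =
    \sum_(x | P x) \sum_(y | P y) F x y + (\sum_(x | P x) \sum_(y | P y) G x y +
    \sum_(x | P x) \sum_(y | P y) H x y + \sum_(x | P x) \sum_(y | P y) I x y).
  move=> P F G H I; rewrite -!big_split; apply: eq_bigr => x _.
  by rewrite -!big_split.
have H : \sum_(x | blk s e x) \sum_(y | blk s e y)
  (((tperm n m x < tperm n m y) && (u y < u x) : nat)
  + (((y == m) && ((n < x < m) && (u m < u x)))
     + ((x == n) && ((y == m) && (u m < u n)))
     + ((x == n) && ((n < y < m) && (u y < u n)))))
  = \sum_(x | blk s e x) \sum_(y | blk s e y) (((x < y) && (u y < u x) : nat)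
  + (((y == n) && ((n < x < m) && (u n < u x)))
     + ((x == m) && ((y == n) && (u n < u m)))
     + ((x == m) && ((n < y < m) && (u y < u m))))).
  by apply: eq_bigr => x _; apply: eq_bigr => y _; apply: pt_swap.
have T1 : forall c (g : 'I_k -> bool), blk s e c ->
  \sum_(x | blk s e x) \sum_(y | blk s e y) ((y == c) && g x : nat)
  = \sum_(x | blk s e x) (g x : nat).
  by move=> c g bc; apply: eq_bigr => x _; apply: sum_pick.
have T2 : forall c (g : 'I_k -> bool), blk s e c ->
  \sum_(x | blk s e x) \sum_(y | blk s e y) ((x == c) && g y : nat)
  = \sum_(y | blk s e y) (g y : nat).
  by move=> c g bc; rewrite exchange_big; apply: eq_bigr => y _; apply: sum_pick.
have T3 : forall c d (b : bool), blk s e c -> blk s e d ->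
  \sum_(x | blk s e x) \sum_(y | blk s e y) ((x == c) && ((y == d) && b) : nat) = b.
  move=> c d b bc bd; rewrite (T2 c (fun y => (y == d) && b)) //.
  exact: sum_pick.
rewrite !S4 in H; rewrite BI_reindex // /BI; move: H.
rewrite (T3 n m) // (T3 m n) // (T1 m) // (T1 n) // (T2 n) // (T2 m) //.
Qed.

Lemma BI_swap u n m s e : n < m -> s <= n -> m < e -> u n < u m ->
  BI (tperm n m * u) s e = BI u s e + 1 +
    2 * \sum_(x | blk s e x) ((n < x < m) && (u n < u x) && (u x < u m) : nat).
Proof.
move=> nm sn me unm; have := BI_swap_raw u nm sn me.
have -> : (u m < u n) = false by lia.
have -> : (u n < u m) = true by [].
have E : \sum_(x | blk s e x) ((n < x < m) && (u m < u x) : nat)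
       + \sum_(y | blk s e y) ((n < y < m) && (u y < u n) : nat)
       + 2 * \sum_(x | blk s e x) ((n < x < m) && (u n < u x) && (u x < u m) : nat)
     = \sum_(x | blk s e x) ((n < x < m) && (u n < u x) : nat)
       + \sum_(y | blk s e y) ((n < y < m) && (u y < u m) : nat).
  rewrite big_distrr -!big_split /=; apply: eq_bigr => x _.
  case: (boolP (n < x < m)) => /= hx; last by rewrite !muln0.
  have h1 : (u x : nat) != u n.
    by apply/eqP => /val_inj/perm_inj ex; move: hx; rewrite ex; lia.
  have h2 : (u x : nat) != u m.
    by apply/eqP => /val_inj/perm_inj ex; move: hx; rewrite ex; lia.
  lia.
lia.
Qed.


Lemma card_BI u s e : BI u s e =
  #|[set p : 'I_k * 'I_k | [&& blk s e p.1, blk s e p.2, p.1 < p.2 & u p.2 < u p.1]]|.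
Proof.
rewrite /BI pair_big /= -sum1_card big_mkcond /= [RHS]big_mkcond /=.
apply: eq_bigr => p _; rewrite inE.
by case: (blk s e p.1); case: (blk s e p.2); case: (p.1 < p.2); case: (u p.2 < u p.1).
Qed.

Lemma len_BI u : len u = BI u 0 k.
Proof.
rewrite card_BI /len /inv_set; apply: eq_card => p; rewrite !inE /blk.
by rewrite !ltn_ord.
Qed.

Lemma BI_id s e : BI 1 s e = 0.
Proof.
rewrite /BI big1 // => x _; rewrite big1 // => y _; rewrite !perm1.
by case: (ltnP x y) => h //=; rewrite ltnNge ltnW.
Qed.

Lemma cover_props u u' (p : 'I_k * 'I_k) : covers_via u u' p ->
  [/\ p.1 < p.2, u' = (tperm p.1 p.2 * u)%g, u p.1 < u p.2 &
      forall x : 'I_k, p.1 < x < p.2 -> (u x < u p.1) || (u p.2 < u x)].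
Proof.
case/and3P => h12 /eqP -> /eqP hl.
have hne : (u p.1 : nat) != u p.2.
  by apply/eqP => /val_inj/perm_inj e; move: h12; rewrite e ltnn.
have hlt : u p.1 < u p.2.
  case: (ltngtP (u p.1) (u p.2)) hne => // hgt _.
  pose v := (tperm p.1 p.2 * u)%g.
  have uv : u = (tperm p.1 p.2 * v)%g by rewrite /v mulgA tperm2 mul1g.
  have hv : v p.1 < v p.2 by rewrite /v !permM tpermL tpermR.
  have := BI_swap h12 (leq0n _) (ltn_ord _) hv.
  by rewrite -uv -!len_BI hl /v; lia.
split => // x hx.
have := BI_swap h12 (leq0n _) (ltn_ord _) hlt; rewrite -!len_BI hl => E.
have : \sum_(x | blk 0 k x) ((p.1 < x < p.2) && (u p.1 < u x) && (u x < u p.2) : nat) == 0.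
  by apply/eqP; lia.
rewrite sum_nat_eq0 => /forallP /(_ x); rewrite /blk leq0n ltn_ord /= hx /=.
have h1 : (u x : nat) != u p.1.
  by apply/eqP => /val_inj/perm_inj e; move: hx; rewrite e ltnn.
have h2 : (u x : nat) != u p.2.
  by apply/eqP => /val_inj/perm_inj e; move: hx; rewrite e ltnn andbF.
lia.
Qed.

Lemma BI_cover u u' (p : 'I_k * 'I_k) s e : covers_via u u' p ->
  BI u' s e <= BI u s e + ((s <= p.1) && (p.2 < e)).
Proof.
move=> /cover_props [h12 -> hlt nb].
case: (boolP ((s <= p.1) && (p.2 < e))) => [/andP[sn me]|hni].
  rewrite BI_swap //.
  have /eqP -> : \sum_(x | blk s e x) ((p.1 < x < p.2) && (u p.1 < u x) && (u x < u p.2) : nat) == 0.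
    rewrite sum_nat_eq0; apply/forallP => x; apply/implyP => _.
    case: (boolP (p.1 < x < p.2)) => //= hx; have := nb x hx; lia.
  lia.
rewrite addn0 /BI; apply: leq_sum => x bx; apply: leq_sum => y byy.
rewrite !permM.
move: bx byy hni; rewrite /blk.
case: (tpermP p.1 p.2 x) => [ex|ex|xn xm]; case: (tpermP p.1 p.2 y) => [ey|ey|yn ym];
  subst => bx byy hni; try lia.
all: try (have xn' : (x : nat) != p.1 by apply/eqP => h; apply: xn; apply: val_inj).
all: try (have xm' : (x : nat) != p.2 by apply/eqP => h; apply: xm; apply: val_inj).
all: try (have yn' : (y : nat) != p.1 by apply/eqP => h; apply: yn; apply: val_inj).
all: try (have ym' : (y : nat) != p.2 by apply/eqP => h; apply: ym; apply: val_inj).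
all: try (have nx := nb x); try (have ny := nb y).
all: try (have hxn : (u x : nat) != u p.1 by apply/eqP => /val_inj/perm_inj e; apply: xn).
all: try (have hxm : (u x : nat) != u p.2 by apply/eqP => /val_inj/perm_inj e; apply: xm).
all: try (have hyn : (u y : nat) != u p.1 by apply/eqP => /val_inj/perm_inj e; apply: yn).
all: try (have hym : (u y : nat) != u p.2 by apply/eqP => /val_inj/perm_inj e; apply: ym).
all: lia.
Qed.

Lemma adj_inv (w : 'S_k) (p q : 'I_k) : p < q -> (w p : nat) = (w q).+1 ->
  inv_set w = (p, q) |: inv_set (tperm p q * w)%g /\
  (p, q) \notin inv_set (tperm p q * w)%g.
Proof.
move=> pq wpq; split; last by rewrite inE /= !permM tpermL tpermR; lia.
apply/setP => [[x y]]; rewrite !inE /= !permM xpair_eqE -!val_eqE /=.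
case: (tpermP p q x) => [ex|ex|xn xm]; case: (tpermP p q y) => [ey|ey|yn ym];
  subst; try lia.
all: try (have xn' : (x : nat) != p by apply/eqP => h; apply: xn; apply: val_inj).
all: try (have xm' : (x : nat) != q by apply/eqP => h; apply: xm; apply: val_inj).
all: try (have yn' : (y : nat) != p by apply/eqP => h; apply: yn; apply: val_inj).
all: try (have ym' : (y : nat) != q by apply/eqP => h; apply: ym; apply: val_inj).
all: try (have hxn : (w x : nat) != w p by apply/eqP => /val_inj/perm_inj e; apply: xn).
all: try (have hxm : (w x : nat) != w q by apply/eqP => /val_inj/perm_inj e; apply: xm).
all: try (have hyn : (w y : nat) != w p by apply/eqP => /val_inj/perm_inj e; apply: yn).
all: try (have hym : (w y : nat) != w q by apply/eqP => /val_inj/perm_inj e; apply: ym).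
all: lia.
Qed.

Lemma adj_cover (w : 'S_k) (p q : 'I_k) : p < q -> (w p : nat) = (w q).+1 ->
  covers_via (tperm p q * w)%g w (p, q) /\ len w = (len (tperm p q * w)%g).+1.
Proof.
move=> pq wpq; have [E N] := adj_inv pq wpq.
have L : len w = (len (tperm p q * w)%g).+1 by rewrite /len E cardsU1 N.
split => //; apply/and3P; split => //=; last by rewrite L.
by rewrite mulgA tperm2 mul1g.
Qed.

Lemma adj_exists_aux (w : 'S_k) d (i j : 'I_k) : i < j -> (w i : nat) = w j + d.+1 ->
  exists p q : 'I_k, p < q /\ (w p : nat) = (w q).+1.
Proof.
elim/ltn_ind: d i j => d IH i j ij wij.
case: d IH wij => [|d] IH wij; first by exists i, j; split => //; lia.
have hv : (w j).+1 < k by have := ltn_ord (w i); lia.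
pose z := ((w^-1)%g (Ordinal hv)).
have wz : (w z : nat) = (w j).+1 by rewrite /z permKV.
case: (ltngtP z j) => hz.
- by exists z, j.
- apply: (IH d (ltnSn d) i z); first by lia.
  by rewrite wz; lia.
- by move/val_inj: hz => hz; move: wz; rewrite hz; lia.
Qed.

Lemma len_pos_adj (w : 'S_k) : 0 < len w ->
  exists p q : 'I_k, p < q /\ (w p : nat) = (w q).+1.
Proof.
rewrite /len card_gt0 => /set0Pn [[i j]]; rewrite inE /= => /andP[ij wij].
apply: (adj_exists_aux (d := (w i - w j).-1) ij); lia.
Qed.

Lemma len0 (w : 'S_k) : len w = 0 -> w = 1%g.
Proof.
move=> l0; apply/permP => x; rewrite perm1.
have noinv : forall a b : 'I_k, a < b -> w a < w b.
  move=> a b ab; case: (ltngtP (w a) (w b)) => // h.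
    have : (a, b) \in inv_set w by rewrite inE /= ab h.
    move=> H; have : 0 < #|inv_set w| by apply/card_gt0P; exists (a,b).
    by rewrite -/(len w) l0.
  by move/val_inj/perm_inj: h => e; move: ab; rewrite e ltnn.
apply: val_inj => /=.
suff G : forall i (x : 'I_k), (x : nat) = i -> (w x : nat) = x by apply: G.
elim/ltn_ind => i IH {}x ex.
have H1 : forall y : 'I_k, y < x -> w y = y.
  move=> y yx; apply: val_inj; apply: (IH y _ y) => //; lia.
case: (ltngtP (w x) x) => // h.
- have := H1 (w x) h => e; move/perm_inj: e => e.
  by move: h; rewrite e ltnn.
- pose z := (w^-1)%g x; have wz : w z = x by rewrite /z permKV.
  case: (ltngtP z x) => hz.
  + by move: (H1 z hz); rewrite wz => e; move: hz; rewrite -e ltnn.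
  + by have := noinv x z hz; rewrite wz; lia.
  + by move/val_inj: hz => hz; rewrite hz in wz; move: h; rewrite wz ltnn.
Qed.

End Inv.

Definition unitv (n r : nat) : seq nat := [seq nat_of_bool (i == r) | i <- iota 0 n].
Definition bs (b : seq nat) (s t : nat) : nat := \sum_(s <= i < t) nth 0 b i.

Lemma size_unitv n r : size (unitv n r) = n.
Proof. by rewrite size_map size_iota. Qed.

Lemma nth_unitv n r i : nth 0 (unitv n r) i = (i == r) && (i < n).
Proof.
case: (ltnP i n) => h; last by rewrite nth_default ?size_unitv // andbF.
by rewrite (nth_map 0) ?size_iota // nth_iota // add0n andbT.
Qed.

Lemma mem_iform n a c x : x \in exps (interval_form n a c) <->
  exists2 r, a <= r < c & x = unitv n r.
Proof.
rewrite /interval_form mem_sum; split.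
  case=> p /mapP [r]; rewrite mem_iota => hr -> ; rewrite /exps /= inE => /eqP ->.
  by exists r => //; lia.
case=> r hr ->; exists (mp_var n r); last by rewrite /exps /= inE.
by apply/mapP; exists r => //; rewrite mem_iota; lia.
Qed.

Lemma good_iform n a c : good n (interval_form n a c).
Proof. by apply: good_sum; apply/allP => p /mapP [r _ ->]; apply: good_var. Qed.

Lemma bs_add x y s t : size x = size y -> bs (exp_add x y) s t = bs x s t + bs y s t.
Proof. by move=> sxy; rewrite /bs -big_split; apply: eq_bigr => i _; rewrite nth_exp_add. Qed.

Lemma bs_nseq n s t : bs (nseq n 0) s t = 0.
Proof. by rewrite /bs big1 // => i _; rewrite nth_nseq if_same. Qed.

Lemma bs_unitv n r s t : r < n -> bs (unitv n r) s t = (s <= r < t).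
Proof.
move=> rn; rewrite /bs; elim: t => [|t IH]; first by rewrite big_geq //; lia.
case: (leqP s t) => st.
  rewrite big_nat_recr //= IH nth_unitv; lia.
rewrite big_geq //; lia.
Qed.

Section Chains.
Variable k : nat.
Local Notation n := k.-1.

Lemma good_cw (u v : 'S_k) : good n (cover_weight u v).
Proof. by apply: good_sum; apply/allP => p /mapP [q _ ->]; apply: good_iform. Qed.

Lemma mem_cw (u v : 'S_k) x : x \in exps (cover_weight u v) <->
  exists p : 'I_k * 'I_k, covers_via u v p /\ x \in exps (interval_form n p.1 p.2).
Proof.
rewrite /cover_weight mem_sum; split.
  by case=> q /mapP [p]; rewrite mem_enum => hp -> hx; exists p.
case=> p [hp hx]; exists (interval_form n p.1 p.2) => //.
by apply/mapP; exists p; rewrite ?mem_enum.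
Qed.

Definition cw_list (u : 'S_k) (c : seq 'S_k) :=
  [seq cover_weight x.1 x.2 | x <- zip (u :: c) c].

Lemma good_cw_list u c : all (good n) (cw_list u c).
Proof. by apply/allP => p /mapP [q _ ->]; apply: good_cw. Qed.

Lemma chain_BI (u : 'S_k) c b s e : e <= k ->
  b \in exps (mp_prod n (cw_list u c)) ->
  BI (last u c) s e <= BI u s e + bs b s e.-1.
Proof.
move=> ek; elim: c u b => [|v c IH] u b /=.
  by rewrite /exps /= inE => /eqP ->; rewrite bs_nseq addn0.
case/mem_mul => x [y [hx hy ->]].
have gy := good_prod (good_cw_list v c).
rewrite bs_add ?(good_exps (good_cw u v) hx) ?(good_exps gy hy) //.
case/mem_cw: hx => p [hp /mem_iform [r hr ->]].
have := IH v y hy; have := BI_cover s e hp.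
have p2 := ltn_ord p.2; rewrite bs_unitv; last by lia.
lia.
Qed.

Lemma mem_R (w : 'S_k) b : b \in exps (R_poly w) <->
  exists c : seq 'S_k, [/\ size c = len w, path (@covers k) 1%g c, last 1%g c = w
                        & b \in exps (chain_weight c)].
Proof.
rewrite /R_poly mem_sum; split.
  case=> q /mapP [c]; rewrite mem_enum => /andP [hp /eqP hl] -> hb.
  by exists c; split => //; rewrite size_tuple.
case=> c [sz hp hl hb].
have sz' : size c == len w by apply/eqP.
exists (chain_weight (Tuple sz')) => //.
by apply/mapP; exists (Tuple sz') => //; rewrite mem_enum; apply/andP; split => //; apply/eqP.
Qed.

Lemma zip_cons_rcons (a v : 'S_k) c :
  zip (a :: rcons c v) (rcons c v) = rcons (zip (a :: c) c) (last a c, v).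
Proof. by elim: c a => [|x c IH] a //=; rewrite IH. Qed.

Lemma chain_ext (c : seq 'S_k) v x y :
  x \in exps (cover_weight (last 1%g c) v) -> y \in exps (chain_weight c) ->
  exp_add x y \in exps (chain_weight (rcons c v)).
Proof.
move=> hx hy; rewrite /chain_weight zip_cons_rcons map_rcons.
have g : all (good n) (rcons (cw_list 1%g c) (cover_weight (last 1%g c) v)).
  by rewrite all_rcons good_cw good_cw_list.
have pe : perm_eq (rcons (cw_list 1%g c) (cover_weight (last 1%g c) v))
  (cover_weight (last 1%g c) v :: cw_list 1%g c) by rewrite perm_rcons.
rewrite (mem_prod_perm _ pe g) /=.
by apply/mem_mul; exists x, y.
Qed.

End Chains.

Section LR.
Variable k : nat.
Local Notation n := k.-1.

Lemma good_Lw (l : seq ('I_k * 'I_k)) :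
  all (good n) [seq interval_form n p.1 p.2 | p : 'I_k * 'I_k <- l].
Proof. by apply/allP => q /mapP [p _ ->]; apply: good_iform. Qed.

Lemma L_to_R N (w : 'S_k) b : len w = N ->
  b \in exps (L_poly w) -> b \in exps (R_poly w).
Proof.
elim: N w b => [|N IH] w b hl.
  have w1 := len0 hl.
  have e0 : enum (inv_set w) = [::].
    by apply/eqP; rewrite -size_eq0 -cardE; move: hl; rewrite /len => ->.
  rewrite /L_poly e0 /= /exps /= inE => /eqP ->.
  apply/mem_R; exists [::]; split; [by rewrite hl | by [] | by rewrite w1 |].
  by rewrite /exps /= inE.
have [p [q [pq wpq]]] : exists p q : 'I_k, p < q /\ (w p : nat) = (w q).+1.
  by apply: len_pos_adj; rewrite hl.
set u := (tperm p q * w)%g.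
have [hc hlen] := adj_cover pq wpq; have [E nin] := adj_inv pq wpq.
rewrite -/u in hc hlen E nin.
have pe : perm_eq (enum (inv_set w)) ((p, q) :: enum (inv_set u)).
  apply: uniq_perm; first exact: enum_uniq.
    by rewrite /= mem_enum nin enum_uniq.
  by move=> z; rewrite mem_enum E in_setU1 in_cons mem_enum.
rewrite /L_poly (mem_prod_perm _ (perm_map _ pe) (good_Lw _)) /=.
case/mem_mul => x [y [hx hy ->]].
have /(IH u y) : len u = N by lia.
case/(_ hy)/mem_R => c [sz hp hlc hy'].
apply/mem_R; exists (rcons c w); split.
- by rewrite size_rcons sz hlen.
- by rewrite rcons_path hp /= hlc; apply/existsP; exists (p, q).
- by rewrite last_rcons.
apply: chain_ext => //; apply/mem_cw; exists (p, q); split => //.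
by rewrite hlc.
Qed.

End LR.

Definition cnt (M : seq (nat * nat)) s t :=
  count (fun iv : nat * nat => (s <= iv.1) && (iv.2 <= t)) M.

Lemma count_sub_in (T : eqType) (P Q : pred T) (s : seq T) :
  (forall x, x \in s -> P x -> Q x) -> count P s <= count Q s.
Proof.
elim: s => //= x s IH H.
have h1 := H x (mem_head _ _).
have h2 : count P s <= count Q s by apply: IH => y ys; apply: H; rewrite in_cons ys orbT.
by case: (P x) h1 => [->|] //=; case: (Q x); lia.
Qed.

Lemma sumn0 (b : seq nat) : sumn b = 0 -> b = nseq (size b) 0.
Proof.
elim: b => //= x b IH h; have x0 : x = 0 by lia.
have sb : sumn b = 0 by lia.
by rewrite x0 {1}(IH sb).
Qed.

Lemma sumn_bs b : sumn b = bs b 0 (size b).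
Proof. by rewrite sumnE (big_nth 0) /bs. Qed.

Lemma bs_split b s m t : s <= m <= t -> bs b s t = bs b s m + bs b m t.
Proof. by move=> /andP[h1 h2]; rewrite /bs (big_cat_nat _ (n:=m)). Qed.

Lemma bs_zero b s t : (forall i, s <= i < t -> nth 0 b i = 0) -> bs b s t = 0.
Proof.
move=> H; rewrite /bs big_nat_cond big1 // => i /andP[hi _]; exact: H.
Qed.

Lemma bs_one b r t : r < t -> bs b r t = nth 0 b r + bs b r.+1 t.
Proof. by move=> h; rewrite /bs big_ltn. Qed.

Theorem hall_L n (M : seq (nat * nat)) b :
  all (fun iv : nat * nat => (iv.1 < iv.2) && (iv.2 <= n)) M -> size b = n ->
  sumn b = size M ->
  (forall s t, s <= t <= n -> cnt M s t <= bs b s t) ->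
  b \in exps (mp_prod n [seq interval_form n iv.1 iv.2 | iv : nat * nat <- M]).
Proof.
move=> val sb hsum hall.
move hN: (size M) => N; rewrite hN in hsum; elim: N M b hN val sb hsum hall => [|N IH] M b hN.
  move/eqP: hN; rewrite size_eq0 => /eqP -> _ sb /sumn0 hb _.
  by rewrite /exps /= inE hb sb.
move=> val sb hsum hall.
have [r0 hr0 rmin] : {r | 0 < nth 0 b r & forall r', 0 < nth 0 b r' -> r <= r'}.
  apply: find_ex_minn.
  have : 0 < sumn b by lia.
  elim: (b) => //= x s IH' h; case: (posnP x) => hx.
    by case: IH'; [lia | move=> r hr; exists r.+1].
  by exists 0.
have rn : r0 < n by case: (ltnP r0 n) hr0 => // h; rewrite nth_default ?sb.
have below : forall i, i < r0 -> nth 0 b i = 0.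
  by move=> i hi; case: (posnP (nth 0 b i)) => // /rmin; lia.
have bs0 : forall s t, t <= r0 -> bs b s t = 0.
  by move=> s t ht; apply: bs_zero => i hi; apply: below; lia.
have nobelow : forall J, J \in M -> r0 < J.2.
  move=> J JM; have H : cnt M 0 r0 == 0.
    rewrite -leqn0; apply: leq_trans (hall 0 r0 _) _; first by rewrite leq0n ltnW.
    by rewrite bs0.
  by move: H; rewrite /cnt eqn0Ngt -has_count => /hasPn /(_ J JM) /=; lia.
have [e0 he0 emin] : {e | has (fun iv : nat * nat => (iv.1 <= r0 < iv.2) && (iv.2 == e)) M &
    forall e', has (fun iv : nat * nat => (iv.1 <= r0 < iv.2) && (iv.2 == e')) M -> e <= e'}.
  apply: find_ex_minn.
  case: (boolP (has (fun iv : nat * nat => iv.1 <= r0 < iv.2) M)) => [/hasP [iv IM hI]|hn].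
    by exists iv.2; apply/hasP; exists iv; rewrite // hI eqxx.
  exfalso; have := hall r0.+1 n; rewrite rn /= => /(_ (leqnn n)).
  have -> : cnt M r0.+1 n = size M.
    apply/eqP; rewrite /cnt -all_count; apply/allP => [[a c]] JM.
    move/hasPn: (hn) => /(_ _ JM) /= hJ; move/allP: (val) => /(_ _ JM) /= vJ.
    have := nobelow _ JM; rewrite /=; lia.
  have E : bs b 0 n = bs b 0 r0 + bs b r0 n by apply: bs_split; lia.
  rewrite (bs0 0 r0) // (bs_one _ rn) in E.
  have E2 := sumn_bs b; rewrite sb in E2; lia.
case/hasP: he0 => [[a0 c0]] I0M /andP[hI0 /eqP eI0]; simpl in hI0, eI0; subst e0.
have JI : forall J, J \in M -> J.1 <= r0 < J.2 -> c0 <= J.2.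
  by move=> J JM hJ; apply: emin; apply/hasP; exists J; rewrite // hJ eqxx.
set b' := set_nth 0 b r0 (nth 0 b r0).-1.
have sb' : size b' = n by rewrite size_set_nth sb; lia.
have nb' : forall i, nth 0 b' i = if i == r0 then (nth 0 b r0).-1 else nth 0 b i.
  by move=> i; rewrite nth_set_nth.
have eb : b = exp_add (unitv n r0) b'.
  apply: (@eq_from_nth _ 0); first by rewrite size_exp_add size_unitv sb' sb minnn.
  move=> i _; rewrite nth_exp_add ?size_unitv ?sb' // nth_unitv nb'.
  case: (eqVneq i r0) => [->|]; rewrite ?rn /=; lia.
have bsb : forall s t, bs b s t = (s <= r0 < t) + bs b' s t.
  by move=> s t; rewrite {1}eb bs_add ?size_unitv ?sb' // bs_unitv.
have pe := perm_to_rem I0M.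
rewrite (mem_prod_perm _ (perm_map _ pe)); last first.
  by apply/allP => q /mapP [J _ ->]; apply: good_iform.
rewrite /=; apply/mem_mul; exists (unitv n r0), b'; split => //.
  by apply/mem_iform; exists r0.
have hsize : size (rem (a0, c0) M) = N by rewrite size_rem // hN.
apply: IH => //.
- by apply/allP => J /mem_rem JM; move/allP: val; apply.
- move: hsum; rewrite !sumn_bs sb sb' bsb /= rn; lia.
move=> s t /andP[st tn].
have cr : cnt (rem (a0, c0) M) s t = cnt M s t - ((s <= a0) && (c0 <= t)).
  by rewrite /cnt count_rem I0M.
have cI : ((s <= a0) && (c0 <= t)) <= cnt M s t.
  rewrite /cnt (seq.permP pe) /=; lia.
simpl in cr, cI.
have := hall s t; rewrite st tn => /(_ isT) H.
have := bsb s t.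
case: (boolP (s <= r0 < t)) => hr /=; last by lia.
case: (boolP ((s <= a0) && (c0 <= t))) => hin; first by lia.
case: (ltnP t c0) => ht.
  have C1 : cnt M s t <= cnt M r0.+1 t.
    apply: count_sub_in => -[a c] JM /andP [h1 h2]; simpl in h1, h2 |- *; rewrite h2 andbT.
    have := nobelow _ JM; have := JI _ JM; rewrite /=. lia.
  have H2 : cnt M r0.+1 t <= bs b r0.+1 t by apply: hall; lia.
  have E : bs b s t = bs b s r0 + bs b r0 t by apply: bs_split; lia.
  rewrite (bs0 s r0) // (bs_one b (r:=r0) (t:=t)) in E; last by lia.
  lia.
have C2 : cnt M s t + 1 <= cnt M 0 t.
  rewrite /cnt !(seq.permP pe) /= (negbTE hin) /=.
  have : count (fun iv : nat * nat => (s <= iv.1) && (iv.2 <= t)) (rem (a0, c0) M)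
      <= count (fun iv : nat * nat => iv.2 <= t) (rem (a0, c0) M).
    by apply: count_sub_in => J _ /andP[_ ->].
  by move=> h; rewrite add0n addn1 ht add1n ltnS.
have H2 : cnt M 0 t <= bs b 0 t by apply: hall; lia.
have E : bs b 0 t = bs b 0 s + bs b s t by apply: bs_split; lia.
rewrite (bs0 0 s) in E; last by lia.
lia.
Qed.

Section Main.
Variable k : nat.
Local Notation n := k.-1.

Lemma Kst_BI (w : 'S_k) s t : 0 < s -> t < k -> Kst w s t = BI w s.-1 t.+1.
Proof.
move=> s0 tk; rewrite card_BI /Kst; apply: eq_card => -[x y].
rewrite !inE /blk /=; have := ltn_ord x; have := ltn_ord y.
case E1: (x < y); case: (w y < w x); rewrite ?andbF ?andbT //= => *; lia.
Qed.

Lemma sum_shift (b : seq nat) s t : 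
  \sum_(s.+1 <= i < t.+1) nth 0 b i.-1 = bs b s t.
Proof. by rewrite big_add1 /=. Qed.

Definition Minv (w : 'S_k) : seq (nat * nat) :=
  [seq (nat_of_ord p.1, nat_of_ord p.2) | p : 'I_k * 'I_k <- enum (inv_set w)].

Lemma cnt_Kst (w : 'S_k) s t : cnt (Minv w) s t = Kst w s.+1 t.
Proof.
rewrite /cnt /Minv count_map -sum1_count big_enum_cond /= sum1dep_card /Kst.
by apply: eq_card => p; rewrite !inE /=; lia.
Qed.

Lemma good_R (w : 'S_k) : good n (R_poly w).
Proof.
apply: good_sum; apply/allP => q /mapP [c _ ->]; apply: good_prod.
exact: good_cw_list.
Qed.

Lemma good_L (w : 'S_k) : good n (L_poly w).
Proof. by apply: good_prod; apply: good_Lw. Qed.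

End Main.

Unset Implicit Arguments.

Theorem mainTheorem10 (k : nat) (hk : 2 <= k) (w : 'S_k) (b : seq nat)
  (hb : size b = k.-1) (hsum : sumn b = len w) :
  ((mp_coef b (R_poly w) != 0%R) <-> (mp_coef b (L_poly w) != 0%R)) /\
  ((mp_coef b (R_poly w) != 0%R) <->
     (forall s t : nat, 1 <= s -> s <= t -> t <= k.-1 ->
        Kst w s t <= \sum_(s <= i < t.+1) nth 0 b i.-1)).
Proof.
rewrite (coef_good _ (good_R w)) (coef_good _ (good_L w)).
have RC : b \in exps (R_poly w) -> forall s t : nat, 1 <= s -> s <= t -> t <= k.-1 ->
        Kst w s t <= \sum_(s <= i < t.+1) nth 0 b i.-1.
  case/mem_R => c [_ _ hl hc] s t s1 st tn.
  case: s s1 st => // s _ st.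
  rewrite sum_shift Kst_BI //; last by lia.
  have := chain_BI s (_ : t.+1 <= k) hc.
  by rewrite hl BI_id add0n /=; apply; lia.
have CL : (forall s t : nat, 1 <= s -> s <= t -> t <= k.-1 ->
        Kst w s t <= \sum_(s <= i < t.+1) nth 0 b i.-1) -> b \in exps (L_poly w).
  move=> C.
  have -> : L_poly w = mp_prod k.-1
      [seq interval_form k.-1 iv.1 iv.2 | iv : nat * nat <- Minv w].
    by rewrite /L_poly /Minv -map_comp.
  apply: hall_L => //.
  - apply/allP => -[a c] /mapP [[x y] pin [-> ->]] /=.
    move: pin; rewrite mem_enum inE => /andP[h _]; simpl in h; have := ltn_ord y; lia.
  - by rewrite hsum /Minv size_map -cardE.
  move=> s t /andP[st tn]; case: (ltngtP s t) st => // [lt|eq] _.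
    by rewrite cnt_Kst -sum_shift; apply: C; lia.
  subst t; apply: leq_trans (_ : _ <= 0) _ => //.
  rewrite -(count_pred0 (Minv w)); apply: count_sub_in => -[a c] /mapP [[x y] pin [-> ->]] /=.
  move: pin; rewrite mem_enum inE => /andP[h _]; simpl in h; lia.
have LR : b \in exps (L_poly w) -> b \in exps (R_poly w) by apply: L_to_R.
split; split => h.
- exact: CL (RC h).
- exact: LR h.
- exact: RC h.
- exact: LR (CL h).
Qed.
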